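(* For every $\rho$-bialgebra $(X,a,c)$ of a higher-order GSOS law $\rho$ of $\Sigma$ over $B$, the underlying $\Sigma$-algebra $(X,a)$ is adequate: if $\llbracket-\rrbracket\colon\mu\Sigma\to X$ is the unique $\Sigma$-algebra morphism from the initial algebra and $\mathsf{beh}\colon\mu\Sigma\to\nu B(\mu\Sigma,-)$ is the unique $B(\mu\Sigma,-)$-coalgebra morphism from $(\mu\Sigma,\gamma)$ to the final $B(\mu\Sigma,-)$-coalgebra, then there exists a morphism $k\colon X\to\nu B(\mu\Sigma,-)$ in $\mathcal{C}$ with $k\cdot\llbracket-\rrbracket=\mathsf{beh}$.
   Context: Let $\mathcal{C}$ be a category with binary products and binary coproducts (pairing $\langle f,g\rangle$, copairing $[f,g]$, codiagonal $\nabla=[\mathrm{id},\mathrm{id}]$). Let $\Sigma\colon\mathcal{C}\to\mathcal{C}$ be an endofunctor with an initial algebra $(\mu\Sigma,\iota)$ and a free $\Sigma$-algebra $(\Sigma^\star X,\iota_X)$ with unit $\eta_X$ on every object $X$; for a $\Sigma$-algebra $(A,a)$ write $\hat a\colon\Sigma^\star A\to A$ for the unique algebra morphism with $\hat a\cdot\eta_A=\mathrm{id}_A$. Let $B\colon\mathcal{C}^{op}\times\mathcal{C}\to\mathcal{C}$ be a bifunctor such that for every object $X$ the endofunctor $B(X,-)$ has a final coalgebra, denoted $\nu B(X,-)$. A higher-order GSOS law is a family $\rho_{X,Y}\colon\Sigma(X\times B(X,Y))\to B(X,\Sigma^\star(X+Y))$ dinatural in $X$ and natural in $Y$. Its operational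 model is the unique $\gamma\colon\mu\Sigma\to B(\mu\Sigma,\mu\Sigma)$ with $\gamma\cdot\iota=B(\mathrm{id},\hat\iota\cdot\Sigma^\star\nabla)\cdot\rho_{\mu\Sigma,\mu\Sigma}\cdot\Sigma\langle\mathrm{id},\gamma\rangle$. A $\rho$-bialgebra is a triple $(X,a,c)$ with $a\colon\Sigma X\to X$, $c\colon X\to B(X,X)$ such that $c\cdot a=B(\mathrm{id},\hat a\cdot\Sigma^\star\nabla)\cdot\rho_{X,X}\cdot\Sigma\langle\mathrm{id},c\rangle$. *)

(* Defs.v *)
(* Equality of morphisms is Leibniz equality. *)

Set Implicit Arguments.
Unset Strict Implicit.

Record Category := {
  Obj :> Type;
  Hom : Obj -> Obj -> Type;
  idm : forall X, Hom X X;
  comp : forall X Y Z, Hom Y Z -> Hom X Y -> Hom X Z;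
  comp_id_l : forall X Y (f : Hom X Y), comp (idm Y) f = f;
  comp_id_r : forall X Y (f : Hom X Y), comp f (idm X) = f;
  comp_assoc : forall X Y Z W (h : Hom Z W) (g : Hom Y Z) (f : Hom X Y),
      comp h (comp g f) = comp (comp h g) f
}.

Arguments idm {C} X : rename.
Arguments comp {C X Y Z} g f : rename.
Notation "g ∘ f" := (comp g f) (at level 40, left associativity).

Record BinProducts (C : Category) := {
  prod_obj : C -> C -> C;
  pi1 : forall X Y, Hom (prod_obj X Y) X;
  pi2 : forall X Y, Hom (prod_obj X Y) Y;
  pair : forall Z X Y, Hom Z X -> Hom Z Y -> Hom Z (prod_obj X Y);
  pair_pi1 : forall Z X Y (f : Hom Z X) (g : Hom Z Y), pi1 X Y ∘ pair f g = f;
  pair_pi2 : forall Z X Y (f : Hom Z X) (g : Hom Z Y), pi2 X Y ∘ pair f g = g;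
  pair_uniq : forall Z X Y (f : Hom Z X) (g : Hom Z Y) (h : Hom Z (prod_obj X Y)),
      pi1 X Y ∘ h = f -> pi2 X Y ∘ h = g -> h = pair f g
}.

Record BinCoproducts (C : Category) := {
  coprod_obj : C -> C -> C;
  in1 : forall X Y, Hom X (coprod_obj X Y);
  in2 : forall X Y, Hom Y (coprod_obj X Y);
  copair : forall X Y Z, Hom X Z -> Hom Y Z -> Hom (coprod_obj X Y) Z;
  copair_in1 : forall X Y Z (f : Hom X Z) (g : Hom Y Z), copair f g ∘ in1 X Y = f;
  copair_in2 : forall X Y Z (f : Hom X Z) (g : Hom Y Z), copair f g ∘ in2 X Y = g;
  copair_uniq : forall X Y Z (f : Hom X Z) (g : Hom Y Z) (h : Hom (coprod_obj X Y) Z),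
      h ∘ in1 X Y = f -> h ∘ in2 X Y = g -> h = copair f g
}.

Arguments pair {C} _ {Z X Y} _ _.
Arguments pi1 {C} _ _ _.
Arguments pi2 {C} _ _ _.
Arguments copair {C} _ {X Y Z} _ _.
Arguments in1 {C} _ _ _.
Arguments in2 {C} _ _ _.

Definition prod_map {C : Category} (P : BinProducts C) {X X' Y Y' : C}
  (f : Hom X X') (g : Hom Y Y') : Hom (prod_obj P X Y) (prod_obj P X' Y') :=
  pair P (f ∘ pi1 P X Y) (g ∘ pi2 P X Y).

Definition coprod_map {C : Category} (S : BinCoproducts C) {X X' Y Y' : C}
  (f : Hom X X') (g : Hom Y Y') : Hom (coprod_obj S X Y) (coprod_obj S X' Y') :=
  copair S (in1 S X' Y' ∘ f) (in2 S X' Y' ∘ g).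

Definition codiag {C : Category} (S : BinCoproducts C) (X : C)
  : Hom (coprod_obj S X X) X := copair S (idm X) (idm X).

Record EndoFunctor (C : Category) := {
  fobj :> C -> C;
  fmap : forall X Y, Hom X Y -> Hom (fobj X) (fobj Y);
  fmap_id : forall X, fmap (idm X) = idm (fobj X);
  fmap_comp : forall X Y Z (g : Hom Y Z) (f : Hom X Y),
      fmap (g ∘ f) = fmap g ∘ fmap f
}.
Arguments fmap {C} _ {X Y} _.

(* Bifunctor B : C^op × C -> C *)
Record Bifunctor (C : Category) := {
  bobj :> C -> C -> C;
  bmap : forall X X' Y Y', Hom X' X -> Hom Y Y' -> Hom (bobj X Y) (bobj X' Y');
  bmap_id : forall X Y, bmap (idm X) (idm Y) = idm (bobj X Y);
  bmap_comp : forall X X' X'' Y Y' Y''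
      (f' : Hom X'' X') (f : Hom X' X) (g : Hom Y Y') (g' : Hom Y' Y''),
      bmap (f ∘ f') (g' ∘ g) = bmap f' g' ∘ bmap f g
}.
Arguments bmap {C} _ {X X' Y Y'} _ _.

Definition is_alg_morph {C : Category} (F : EndoFunctor C) {A A' : C}
  (a : Hom (F A) A) (a' : Hom (F A') A') (h : Hom A A') : Prop :=
  h ∘ a = a' ∘ fmap F h.

Arguments is_alg_morph {C} F {A A'} a a' h.

Record InitialAlgebra {C : Category} (F : EndoFunctor C) := {
  mu : C;
  iota : Hom (F mu) mu;
  fold : forall (A : C) (a : Hom (F A) A), Hom mu A;
  fold_morph : forall A (a : Hom (F A) A), is_alg_morph F iota a (fold a);
  fold_uniq : forall A (a : Hom (F A) A) (h : Hom mu A),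
      is_alg_morph F iota a h -> h = fold a
}.

Record FreeAlgebras {C : Category} (F : EndoFunctor C) := {
  free_obj : C -> C;
  free_iota : forall X, Hom (F (free_obj X)) (free_obj X);
  free_eta : forall X, Hom X (free_obj X);
  free_ext : forall X (A : C) (a : Hom (F A) A), Hom X A -> Hom (free_obj X) A;
  free_ext_morph : forall X A (a : Hom (F A) A) (f : Hom X A),
      is_alg_morph F (free_iota X) a (free_ext a f);
  free_ext_eta : forall X A (a : Hom (F A) A) (f : Hom X A),
      free_ext a f ∘ free_eta X = f;
  free_ext_uniq : forall X A (a : Hom (F A) A) (f : Hom X A) (h : Hom (free_obj X) A),
      is_alg_morph F (free_iota X) a h -> h ∘ free_eta X = f -> h = free_ext a f
}.
Arguments free_obj {C F} _ _.
Arguments free_iota {C F} _ _.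
Arguments free_eta {C F} _ _.
Arguments free_ext {C F} _ {X A} _ _.

Definition hat {C : Category} {F : EndoFunctor C} (Fr : FreeAlgebras F)
  {A : C} (a : Hom (F A) A) : Hom (free_obj Fr A) A :=
  free_ext Fr a (idm A).

Definition free_map {C : Category} {F : EndoFunctor C} (Fr : FreeAlgebras F)
  {X Y : C} (f : Hom X Y) : Hom (free_obj Fr X) (free_obj Fr Y) :=
  free_ext Fr (free_iota Fr Y) (free_eta Fr Y ∘ f).

Record FinalCoalgebras {C : Category} (B : Bifunctor C) := {
  nu : C -> C;
  zeta : forall X, Hom (nu X) (B X (nu X));
  unfold : forall X (Y : C) (c : Hom Y (B X Y)), Hom Y (nu X);
  unfold_morph : forall X Y (c : Hom Y (B X Y)),
      zeta X ∘ unfold c = bmap B (idm X) (unfold c) ∘ c;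
  unfold_uniq : forall X Y (c : Hom Y (B X Y)) (h : Hom Y (nu X)),
      zeta X ∘ h = bmap B (idm X) h ∘ c -> h = unfold c
}.
Arguments nu {C B} _ _.
Arguments unfold {C B} _ {X Y} _.

Section GSOS.
Context {C : Category} (P : BinProducts C) (S : BinCoproducts C)
        (Sig : EndoFunctor C) (Fr : FreeAlgebras Sig) (B : Bifunctor C).

Definition rho_type : Type := forall X Y : C,
  Hom (Sig (prod_obj P X (B X Y))) (B X (free_obj Fr (coprod_obj S X Y))).

(* dinatural in X, natural in Y *)
Definition is_ho_gsos_law (rho : rho_type) : Prop :=
  (forall (X X' Y : C) (f : Hom X X'),
     bmap B (idm X) (free_map Fr (coprod_map S f (idm Y))) ∘ rho X Y
       ∘ fmap Sig (prod_map P (idm X) (bmap B f (idm Y)))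
     = bmap B f (idm (free_obj Fr (coprod_obj S X' Y))) ∘ rho X' Y
       ∘ fmap Sig (prod_map P f (idm (B X' Y))))
  /\
  (forall (X Y Y' : C) (g : Hom Y Y'),
     bmap B (idm X) (free_map Fr (coprod_map S (idm X) g)) ∘ rho X Y
     = rho X Y' ∘ fmap Sig (prod_map P (idm X) (bmap B (idm X) g))).

Definition is_operational_model (rho : rho_type) (I : InitialAlgebra Sig)
  (gamma : Hom (mu I) (B (mu I) (mu I))) : Prop :=
  gamma ∘ iota I =
    bmap B (idm (mu I)) (hat Fr (iota I) ∘ free_map Fr (codiag S (mu I)))
    ∘ rho (mu I) (mu I) ∘ fmap Sig (pair P (idm (mu I)) gamma).

Definition is_bialgebra (rho : rho_type) (X : C)
  (a : Hom (Sig X) X) (c : Hom X (B X X)) : Prop :=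
  c ∘ a =
    bmap B (idm X) (hat Fr a ∘ free_map Fr (codiag S X))
    ∘ rho X X ∘ fmap Sig (pair P (idm X) c).

End GSOS.

(* Main.v *)
Require Import Defs.

Section Aux.
Context {C : Category}.

Lemma pair_comp (P : BinProducts C) Z' Z X Y (f : Hom Z X) (g : Hom Z Y) (h : Hom Z' Z) :
  pair P f g ∘ h = pair P (f ∘ h) (g ∘ h).
Proof.
  apply pair_uniq; rewrite comp_assoc; [rewrite pair_pi1 | rewrite pair_pi2]; reflexivity.
Qed.

Lemma prod_map_pair (P : BinProducts C) Z X X' Y Y' (f : Hom X X') (g : Hom Y Y')
  (h : Hom Z X) (k : Hom Z Y) :
  prod_map P f g ∘ pair P h k = pair P (f ∘ h) (g ∘ k).
Proof.
  unfold prod_map. rewrite pair_comp, <- !comp_assoc, pair_pi1, pair_pi2. reflexivity.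
Qed.

Lemma copair_comp (S : BinCoproducts C) X Y Z Z' (f : Hom X Z) (g : Hom Y Z) (h : Hom Z Z') :
  h ∘ copair S f g = copair S (h ∘ f) (h ∘ g).
Proof.
  apply copair_uniq; rewrite <- comp_assoc; [rewrite copair_in1 | rewrite copair_in2]; reflexivity.
Qed.

Lemma copair_coprod_map (S : BinCoproducts C) X X' Y Y' Z (f : Hom X' Z) (g : Hom Y' Z)
  (h : Hom X X') (k : Hom Y Y') :
  copair S f g ∘ coprod_map S h k = copair S (f ∘ h) (g ∘ k).
Proof.
  unfold coprod_map. rewrite copair_comp, !comp_assoc, copair_in1, copair_in2. reflexivity.
Qed.

Lemma alg_comp (F : EndoFunctor C) A1 A2 A3 (a1 : Hom (F A1) A1) (a2 : Hom (F A2) A2)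
  (a3 : Hom (F A3) A3) h k :
  is_alg_morph F a1 a2 h -> is_alg_morph F a2 a3 k -> is_alg_morph F a1 a3 (k ∘ h).
Proof.
  unfold is_alg_morph; intros H1 H2.
  rewrite <- comp_assoc, H1, comp_assoc, H2, fmap_comp, comp_assoc. reflexivity.
Qed.

Lemma free_eq (F : EndoFunctor C) (Fr : FreeAlgebras F) X A (a : Hom (F A) A) h1 h2 :
  is_alg_morph F (free_iota Fr X) a h1 -> is_alg_morph F (free_iota Fr X) a h2 ->
  h1 ∘ free_eta Fr X = h2 ∘ free_eta Fr X -> h1 = h2.
Proof.
  intros H1 H2 E.
  rewrite (free_ext_uniq H1 E). symmetry. exact (free_ext_uniq H2 eq_refl).
Qed.

Lemma bmap_id_id (B : Bifunctor C) X Y Y' Y'' (g : Hom Y Y') (g' : Hom Y' Y'') :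
  bmap B (idm X) g' ∘ bmap B (idm X) g = bmap B (idm X) (g' ∘ g).
Proof. rewrite <- bmap_comp, comp_id_l. reflexivity. Qed.

Lemma bmap_f_id (B : Bifunctor C) X X' Y Y' (f : Hom X' X) (g : Hom Y Y') :
  bmap B f (idm Y') ∘ bmap B (idm X) g = bmap B f g.
Proof. rewrite <- bmap_comp, ?comp_id_l, ?comp_id_r. reflexivity. Qed.

Lemma bmap_id_f (B : Bifunctor C) X X' Y Y' (f : Hom X' X) (g : Hom Y Y') :
  bmap B (idm X') g ∘ bmap B f (idm Y) = bmap B f g.
Proof. rewrite <- bmap_comp, ?comp_id_l, ?comp_id_r. reflexivity. Qed.

Lemma primrec_uniq (P : BinProducts C) (F : EndoFunctor C) (I : InitialAlgebra F) (Y : C)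
  (r : Hom (F (prod_obj P (mu I) Y)) Y) (h1 h2 : Hom (mu I) Y) :
  h1 ∘ iota I = r ∘ fmap F (pair P (idm (mu I)) h1) ->
  h2 ∘ iota I = r ∘ fmap F (pair P (idm (mu I)) h2) -> h1 = h2.
Proof.
  intros E1 E2.
  set (alpha := pair P (iota I ∘ fmap F (pi1 P (mu I) Y)) r).
  assert (K : forall h, h ∘ iota I = r ∘ fmap F (pair P (idm (mu I)) h) ->
              pair P (idm (mu I)) h = fold I alpha).
  { intros h E. apply fold_uniq. unfold is_alg_morph, alpha.
    rewrite !pair_comp, <- comp_assoc, <- fmap_comp, pair_pi1, fmap_id, comp_id_r,
      comp_id_l, E. reflexivity. }
  rewrite <- (pair_pi2 P (idm (mu I)) h1), <- (pair_pi2 P (idm (mu I)) h2), (K _ E1), (K _ E2).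
  reflexivity.
Qed.

Lemma free_ext_eta_k (F : EndoFunctor C) (Fr : FreeAlgebras F) X A W (a : Hom (F A) A)
  (f : Hom X A) (k : Hom W X) :
  free_ext Fr a f ∘ (free_eta Fr X ∘ k) = f ∘ k.
Proof. rewrite comp_assoc, free_ext_eta. reflexivity. Qed.

End Aux.

Theorem theorem3p11
  (C : Category) (P : BinProducts C) (S : BinCoproducts C)
  (Sig : EndoFunctor C) (I : InitialAlgebra Sig) (Fr : FreeAlgebras Sig)
  (B : Bifunctor C) (N : FinalCoalgebras B)
  (rho : rho_type P S Fr B) (Hrho : is_ho_gsos_law rho)
  (gamma : Hom (mu I) (B (mu I) (mu I)))
  (Hgamma : is_operational_model rho gamma)
  (X : C) (a : Hom (Sig X) X) (c : Hom X (B X X))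
  (Hbi : is_bialgebra rho a c) :
  exists k : Hom X (nu N (mu I)), k ∘ fold I a = unfold N gamma.
Proof.
  destruct Hrho as [Hdin Hnat].
  set (J := fold I a).
  set (ha := hat Fr a ∘ free_map Fr (codiag S X)).
  set (r := bmap B (idm (mu I)) (ha ∘ free_map Fr (coprod_map S J (idm X))) ∘ rho (mu I) X).
  assert (Key : bmap B J (idm X) ∘ c ∘ J = bmap B (idm (mu I)) J ∘ gamma).
  { apply (@primrec_uniq C P Sig I _ r).
    -
      assert (EJ : J ∘ iota I = a ∘ fmap Sig J) by apply fold_morph.
      rewrite <- !comp_assoc, EJ.
      assert (E1 : pair P (idm (mu I)) (bmap B J (idm X) ∘ (c ∘ J)) =
                   prod_map P (idm (mu I)) (bmap B J (idm X)) ∘ pair P (idm (mu I)) (c ∘ J))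
        by (rewrite prod_map_pair, comp_id_l; reflexivity).
      rewrite E1, fmap_comp. unfold r.
      rewrite <- (@bmap_id_id C B (mu I) _ _ _ (free_map Fr (coprod_map S J (idm X))) ha).
      assert (D : forall W (k : Hom W (Sig (prod_obj P (mu I) (B X X)))),
        bmap B (idm (mu I)) (free_map Fr (coprod_map S J (idm X))) ∘ (rho (mu I) X ∘
          (fmap Sig (prod_map P (idm (mu I)) (bmap B J (idm X))) ∘ k)) =
        bmap B J (idm (free_obj Fr (coprod_obj S X X))) ∘ (rho X X ∘
          (fmap Sig (prod_map P J (idm (B X X))) ∘ k))).
      { intros W k. rewrite !comp_assoc, Hdin. reflexivity. }
      rewrite <- !comp_assoc, D.
      assert (E2 : fmap Sig (prod_map P J (idm (B X X))) ∘ fmap Sig (pair P (idm (mu I)) (c ∘ J))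
                   = fmap Sig (pair P (idm X) c) ∘ fmap Sig J).
      { rewrite <- !fmap_comp, prod_map_pair, pair_comp, !comp_id_l, !comp_id_r. reflexivity. }
      rewrite E2, !comp_assoc. unfold is_bialgebra in Hbi. rewrite <- (comp_assoc _ c a), Hbi, !comp_assoc, bmap_f_id, bmap_id_f. reflexivity.
    - unfold is_operational_model in Hgamma.
      rewrite <- comp_assoc, Hgamma.
      assert (E1 : pair P (idm (mu I)) (bmap B (idm (mu I)) J ∘ gamma) =
                   prod_map P (idm (mu I)) (bmap B (idm (mu I)) J) ∘ pair P (idm (mu I)) gamma)
        by (rewrite prod_map_pair, comp_id_l; reflexivity).
      rewrite E1, fmap_comp. unfold r.
      assert (D : forall W (k : Hom W (Sig (prod_obj P (mu I) (B (mu I) (mu I))))),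
        rho (mu I) X ∘ (fmap Sig (prod_map P (idm (mu I)) (bmap B (idm (mu I)) J)) ∘ k) =
        bmap B (idm (mu I)) (free_map Fr (coprod_map S (idm (mu I)) J)) ∘ (rho (mu I) (mu I) ∘ k)).
      { intros W k. rewrite !comp_assoc, Hnat. reflexivity. }
      rewrite <- !comp_assoc, D, !comp_assoc, !bmap_id_id.
      assert (EQ : J ∘ (hat Fr (iota I) ∘ free_map Fr (codiag S (mu I))) =
                   ha ∘ free_map Fr (coprod_map S J (idm X)) ∘ free_map Fr (coprod_map S (idm (mu I)) J)).
      { apply (@free_eq C Sig Fr _ X a).
        - apply alg_comp with (a2 := iota I); [| apply fold_morph].
          apply alg_comp with (a2 := free_iota Fr (mu I)); apply free_ext_morph.
        - unfold ha.
          apply alg_comp with (a2 := free_iota Fr (coprod_obj S (mu I) X)); [apply free_ext_morph|].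
          apply alg_comp with (a2 := free_iota Fr (coprod_obj S X X)); [apply free_ext_morph|].
          apply alg_comp with (a2 := free_iota Fr X); apply free_ext_morph.
        - unfold ha, hat, free_map.
          repeat (rewrite <- ?comp_assoc; rewrite ?free_ext_eta, ?free_ext_eta_k).
          rewrite !comp_id_l, !comp_assoc. unfold codiag.
          rewrite !copair_coprod_map, copair_comp, !comp_id_l, !comp_id_r. reflexivity. }
      rewrite EQ. reflexivity. }
  exists (unfold N (bmap B J (idm X) ∘ c)).
  apply unfold_uniq.
  rewrite comp_assoc, unfold_morph, <- !comp_assoc.
  rewrite (comp_assoc _ c J), Key, comp_assoc, bmap_id_id. reflexivity.
Qed.
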